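(* Let $(\mathbb{X},\dagger)$ be a Moore-Penrose dagger additive category and let $\begin{bmatrix}\alpha&\beta\\ \beta^\dagger&\delta\end{bmatrix}:B\oplus C\to B\oplus C$ be a $\dagger$-positive map. Then for any map $\begin{bmatrix}\phi&\psi\end{bmatrix}:B\oplus C\to D$ such that $\begin{bmatrix}\alpha&\beta\\ \beta^\dagger&\delta\end{bmatrix}=\begin{bmatrix}\phi&\psi\end{bmatrix}^\dagger\circ\begin{bmatrix}\phi&\psi\end{bmatrix}$, we have $\beta^\dagger\circ\alpha^\circ=\psi^\dagger\circ(\phi^\circ)^\dagger$.
   Context: A dagger additive category is a dagger category (contravariant identity-on-objects involutive functor $\dagger$) whose hom-sets are abelian groups with bilinear composition and additive $\dagger$, having a zero object and finite biproducts whose projections $\pi_j$ and injections $\iota_j$ satisfy $\pi_j^\dagger=\iota_j$. Maps between biproducts are written as matrices; composition is matrix multiplication and $\dagger$ is transpose with entrywise $\dagger$. An endomorphism $p$ is $\dagger$-positive if $p=\chi^\dagger\circ\chi$ for some map $\chi$. A Moore-Penrose inverse of $f:A\to B$ is a map $f^\circ:B\to A$ with $f f^\circ f=f$, $f^\circ f f^\circ=f^\circ$, $(f f^\circ)^\dagger=f f^\circ$, $(f^\circ f)^\dagger=f^\circ f$ (unique when it exists); a Moore-Penrose dagger additive category is one in which every map has a Moore-Penrose inverse. Here $\alpha:B\to B$, $\beta:C\to B$, $\delta:C\to C$, $\phi:B\to D$, $\psi:C\to D$. *)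

(* Defs.v *)
From HB Require Import structures.
From mathcomp Require Import all_boot all_order all_algebra.
Set Implicit Arguments. Unset Strict Implicit. Unset Printing Implicit Defensive.
Import GRing.Theory.
Local Open Scope ring_scope.

Record DagAddCat := {
  Ob : Type;
  Mor : Ob -> Ob -> zmodType;
  idm : forall A, Mor A A;
  mcomp : forall A B C, Mor B C -> Mor A B -> Mor A C;
  dag : forall A B, Mor A B -> Mor B A;
  compA : forall A B C D (f : Mor C D) (g : Mor B C) (h : Mor A B),
      mcomp f (mcomp g h) = mcomp (mcomp f g) h;
  comp1m : forall A B (f : Mor A B), mcomp (idm B) f = f;
  compm1 : forall A B (f : Mor A B), mcomp f (idm A) = f;
  compDl : forall A B C (f g : Mor B C) (h : Mor A B),
      mcomp (f + g) h = mcomp f h + mcomp g h;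
  compDr : forall A B C (f : Mor B C) (g h : Mor A B),
      mcomp f (g + h) = mcomp f g + mcomp f h;
  dag_comp : forall A B C (f : Mor B C) (g : Mor A B),
      dag (mcomp f g) = mcomp (dag g) (dag f);
  dag_id : forall A, dag (idm A) = idm A;
  dagK : forall A B (f : Mor A B), dag (dag f) = f;
  dagD : forall A B (f g : Mor A B), dag (f + g) = dag f + dag g;
  zob : Ob;
  zob_id : idm zob = 0;  (* in an additive category: zob is a zero object *)
  bip : Ob -> Ob -> Ob;
  pr1 : forall A B, Mor (bip A B) A;
  pr2 : forall A B, Mor (bip A B) B;
  in1 : forall A B, Mor A (bip A B);
  in2 : forall A B, Mor B (bip A B);
  pr1in1 : forall A B, mcomp (pr1 A B) (in1 A B) = idm A;
  pr2in2 : forall A B, mcomp (pr2 A B) (in2 A B) = idm B;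
  pr1in2 : forall A B, mcomp (pr1 A B) (in2 A B) = 0;
  pr2in1 : forall A B, mcomp (pr2 A B) (in1 A B) = 0;
  bip_id : forall A B,
      mcomp (in1 A B) (pr1 A B) + mcomp (in2 A B) (pr2 A B) = idm (bip A B);
  dag_pr1 : forall A B, dag (pr1 A B) = in1 A B;
  dag_pr2 : forall A B, dag (pr2 A B) = in2 A B
}.

Arguments Ob d : clear implicits.
Arguments Mor d A B : clear implicits.
Arguments idm {d} A.
Arguments mcomp {d A B C}.
Arguments dag {d A B}.
Arguments bip {d}.
Arguments pr1 {d} A B.
Arguments pr2 {d} A B.
Arguments in1 {d} A B.
Arguments in2 {d} A B.

Section Defs.
Variable X : DagAddCat.

Definition rowmap (A B D : Ob X) (f : Mor X A D) (g : Mor X B D)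
  : Mor X (bip A B) D := mcomp f (pr1 A B) + mcomp g (pr2 A B).

(* 2x2 matrix [[a b];[c d]] : A (+) B -> C (+) D *)
Definition mat2 (A B C D : Ob X) (a : Mor X A C) (b : Mor X B C)
  (c : Mor X A D) (d : Mor X B D) : Mor X (bip A B) (bip C D) :=
  mcomp (in1 C D) (mcomp a (pr1 A B)) + mcomp (in1 C D) (mcomp b (pr2 A B))
  + mcomp (in2 C D) (mcomp c (pr1 A B)) + mcomp (in2 C D) (mcomp d (pr2 A B)).

Definition dag_positive (A : Ob X) (p : Mor X A A) : Prop :=
  exists (E : Ob X) (chi : Mor X A E), p = mcomp (dag chi) chi.

Definition is_MP_inverse (A B : Ob X) (f : Mor X A B) (g : Mor X B A) : Prop :=
  [/\ mcomp f (mcomp g f) = f,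
      mcomp g (mcomp f g) = g,
      dag (mcomp f g) = mcomp f g &
      dag (mcomp g f) = mcomp g f].

Definition MoorePenrose : Prop :=
  forall (A B : Ob X) (f : Mor X A B), exists g, is_MP_inverse f g.
End Defs.

(* Main.v *)
Require Import Defs.
From mathcomp Require Import all_boot all_order all_algebra.
Import GRing.Theory.
Local Open Scope ring_scope.

Section S.
Variable X : DagAddCat.
Local Notation "f ⊚ g" := (mcomp f g) (at level 40, left associativity).

Lemma comp0l (A B C : Ob X) (h : Mor X A B) : (0 : Mor X B C) ⊚ h = 0.
Proof. apply: (addrI ((0 : Mor X B C) ⊚ h)); by rewrite -Defs.compDl !addr0. Qed.
Lemma comp0r (A B C : Ob X) (h : Mor X B C) : h ⊚ (0 : Mor X A B) = 0.
Proof. apply: (addrI (h ⊚ (0 : Mor X A B))); by rewrite -Defs.compDr !addr0. Qed.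

Lemma p1i1 (A B E : Ob X) (f : Mor X E A) : pr1 A B ⊚ (in1 A B ⊚ f) = f.
Proof. by rewrite Defs.compA pr1in1 Defs.comp1m. Qed.
Lemma p2i2 (A B E : Ob X) (f : Mor X E B) : pr2 A B ⊚ (in2 A B ⊚ f) = f.
Proof. by rewrite Defs.compA pr2in2 Defs.comp1m. Qed.
Lemma p1i2 (A B E : Ob X) (f : Mor X E B) : pr1 A B ⊚ (in2 A B ⊚ f) = 0.
Proof. by rewrite Defs.compA pr1in2 comp0l. Qed.
Lemma p2i1 (A B E : Ob X) (f : Mor X E A) : pr2 A B ⊚ (in1 A B ⊚ f) = 0.
Proof. by rewrite Defs.compA pr2in1 comp0l. Qed.

Lemma ctx2 (A B C E : Ob X) (a : Mor X B C) (b : Mor X A B) (d : Mor X A C)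
  (k : Mor X C E) : a ⊚ b = d -> k ⊚ a ⊚ b = k ⊚ d.
Proof. by move=> <-; rewrite Defs.compA. Qed.
Lemma ctx3 (A B C D E : Ob X) (a : Mor X B C) (b : Mor X A B) (c : Mor X D A)
  (d : Mor X D C) (k : Mor X C E) : a ⊚ b ⊚ c = d -> k ⊚ a ⊚ b ⊚ c = k ⊚ d.
Proof. by move=> <-; rewrite !Defs.compA. Qed.

Ltac norm := rewrite ?Defs.dag_comp ?Defs.dagK ?Defs.compA.

Lemma MP_norm (A B : Ob X) (f : Mor X A B) g : is_MP_inverse f g ->
  [/\ f ⊚ g ⊚ f = f, g ⊚ f ⊚ g = g, dag g ⊚ dag f = f ⊚ g,
      dag f ⊚ dag g = g ⊚ f & dag f ⊚ dag g ⊚ dag f = dag f] *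
  (dag g ⊚ dag f ⊚ dag g = dag g).
Proof.
case=> h1 h2 h3 h4.
have a1 : f ⊚ g ⊚ f = f by rewrite -Defs.compA.
have a2 : g ⊚ f ⊚ g = g by rewrite -Defs.compA.
split; first split => //.
- by rewrite -Defs.dag_comp.
- by rewrite -Defs.dag_comp.
- by rewrite -Defs.compA -!Defs.dag_comp a1.
- by rewrite -Defs.compA -!Defs.dag_comp a2.
Qed.

Lemma MP_uniq (A B : Ob X) (f : Mor X A B) g h :
  is_MP_inverse f g -> is_MP_inverse f h -> g = h.
Proof.
move=> /MP_norm [[g1 g2 g3 g4 g5] g6] /MP_norm [[h1 h2 h3 h4 h5] h6].
have cA := @Defs.compA X.
have E1 : g = g ⊚ f ⊚ h.
  transitivity (g ⊚ (f ⊚ g)); first by rewrite cA g2.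
  transitivity (g ⊚ dag g ⊚ dag f); first by rewrite -g3 cA.
  transitivity (g ⊚ dag g ⊚ (dag f ⊚ dag h ⊚ dag f)); first by rewrite h5.
  transitivity (g ⊚ (dag g ⊚ dag f) ⊚ (dag h ⊚ dag f)); first by rewrite !cA.
  by rewrite g3 h3 !cA g2.
have E2 : h = g ⊚ f ⊚ h.
  transitivity (h ⊚ f ⊚ h); first by rewrite h2.
  transitivity (dag f ⊚ dag h ⊚ h); first by rewrite h4.
  transitivity ((dag f ⊚ dag g ⊚ dag f) ⊚ dag h ⊚ h); first by rewrite g5.
  transitivity ((dag f ⊚ dag g) ⊚ (dag f ⊚ dag h) ⊚ h); first by rewrite !cA.
  transitivity (g ⊚ f ⊚ (h ⊚ f ⊚ h)); last by rewrite h2.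
  by rewrite g4 h4 !cA.
by rewrite E1 -E2.
Qed.
Ltac simp := rewrite /mat2 /rowmap ?Defs.dagD ?Defs.dag_comp ?dag_pr1 ?dag_pr2
  ?Defs.compDl ?Defs.compDr -?Defs.compA ?p1i1 ?p1i2 ?p2i1 ?p2i2
  ?pr1in1 ?pr1in2 ?pr2in1 ?pr2in2 ?comp0l ?comp0r ?Defs.compm1 ?addr0 ?add0r.

Lemma mat2_11 (A B C D : Ob X) a b c d :
  pr1 C D ⊚ (@mat2 X A B C D a b c d) ⊚ in1 A B = a.
Proof. by do 4 simp. Qed.
Lemma mat2_12 (A B C D : Ob X) a b c d :
  pr1 C D ⊚ (@mat2 X A B C D a b c d) ⊚ in2 A B = b.
Proof. by do 4 simp. Qed.
Lemma row_11 (A B D : Ob X) (f : Mor X A D) (g : Mor X B D) :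
  pr1 A B ⊚ (dag (rowmap f g) ⊚ rowmap f g) ⊚ in1 A B = dag f ⊚ f.
Proof. by do 4 simp. Qed.
Lemma row_12 (A B D : Ob X) (f : Mor X A D) (g : Mor X B D) :
  pr1 A B ⊚ (dag (rowmap f g) ⊚ rowmap f g) ⊚ in2 A B = dag f ⊚ g.
Proof. by do 4 simp. Qed.

End S.
Local Notation "f ⊚ g" := (mcomp f g) (at level 40, left associativity).

Theorem mainTheorem14 (X : DagAddCat) (HMP : MoorePenrose X)
  (B C D : Ob X) (alpha : Mor X B B) (beta : Mor X C B) (delta : Mor X C C)
  (phi : Mor X B D) (psi : Mor X C D)
  (Hpos : dag_positive (mat2 alpha beta (dag beta) delta))
  (Hfac : mat2 alpha beta (dag beta) delta
          = mcomp (dag (rowmap phi psi)) (rowmap phi psi))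
  (alpha_o : Mor X B B) (phi_o : Mor X D B)
  (Halpha : is_MP_inverse alpha alpha_o)
  (Hphi : is_MP_inverse phi phi_o) :
  mcomp (dag beta) alpha_o = mcomp (dag psi) (dag phi_o).
Proof.
have Ha : alpha = mcomp (dag phi) phi.
  by rewrite -(@mat2_11 X _ _ _ _ alpha beta (dag beta) delta) Hfac (@row_11 X).
have Hb : beta = mcomp (dag phi) psi.
  by rewrite -(@mat2_12 X _ _ _ _ alpha beta (dag beta) delta) Hfac (@row_12 X).
have cA := @Defs.compA X.
have dC := @Defs.dag_comp X.
have dK := @Defs.dagK X.
move: (@MP_norm X _ _ _ _ Hphi) => [[a1 a2 a3 a4 a5] a6].
set p := phi in a1 a2 a3 a4 a5 a6 Ha Hb *.
set q := phi_o in a1 a2 a3 a4 a5 a6 *.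
have L1 : dag p ⊚ p ⊚ q = dag p by rewrite -cA -a3 cA a5.
have L2 : q ⊚ dag q ⊚ dag p = q by rewrite -cA a3 cA a2.
have L4 : p ⊚ q ⊚ dag q = dag q by rewrite -a3 a6.
have Hao : alpha_o = q ⊚ dag q.
  apply: (@MP_uniq X _ _ _ _ _ Halpha); rewrite Ha; split.
  - by rewrite !cA L1 a5.
  - by rewrite !cA L2 a2.
  - by rewrite !dC !dK !cA L1 L2 a4.
  - by rewrite !dC !dK !cA L1 L2 a4.
by rewrite Hao Hb !dC dK !cA (@ctx3 X _ _ _ _ _ _ _ _ _ _ L4).
Qed.
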